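(* Let $p\ge 2$, $w\ge 0$ and $z\in\mathbb{R}^{p-1}$. Let $|z_{(1)}|\ge |z_{(2)}|\ge\cdots$ denote the absolute values of the entries of $z$ sorted in decreasing order. Define \[ \tilde\lambda_1=\min\{\lambda\ge0:\|S(z,\lambda)\|_1+\lambda\le w\},\quad \tilde\lambda_2=\max\{\lambda\ge0:\|S(z,\lambda)\|_1+\lambda\le w\},\quad \tilde\lambda_3=\max\{\lambda\ge0:\|S(z,2\lambda)\|_1\ge w\}. \] Then: (1) $\|z\|_\infty\le w$ if and only if $\tilde\lambda_1,\tilde\lambda_2$ are finite, in which case $\tilde\lambda_1\le |z_{(2)}|$ and $\tilde\lambda_2=w$. (2) $\|z\|_1\ge w>0$ if and only if $\tilde\lambda_3$ is finite, in which case $\tilde\lambda_3\le (1-w/\|z\|_1)\,\|z\|_\infty/2$. (3) If $w>0$ and $\|z\|_\infty\le w\le \|z\|_1$, then $\tilde\lambda_3\le\tilde\lambda_1\le\tilde\lambda_2$.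
   Context: $S(x,t)=\mathrm{sign}(x)\cdot(|x|-t)_+$ is the soft-thresholding function, applied componentwise to vectors. Conventions: the minimum of an empty set is $+\infty$, the maximum of an empty set is $-\infty$, and the maximum of a set unbounded above is $+\infty$; ''finite'' means not $\pm\infty$. If $p-1=1$, set $|z_{(2)}|:=0$. *)

(* Defs.v *)
From HB Require Import structures.
From mathcomp Require Import all_boot all_order all_algebra.
From mathcomp Require Import all_classical all_reals ereal.
Set Implicit Arguments. Unset Strict Implicit. Unset Printing Implicit Defensive.
Import Order.TTheory GRing.Theory Num.Theory.
Local Open Scope ring_scope.
Local Open Scope classical_set_scope.

(* Soft-thresholding S(x,t) = sign(x) * (|x| - t)_+ *)
Definition soft {R : realType} (x t : R) : R := Num.sg x * Num.max (`|x| - t) 0.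

Definition soft_norm1 {R : realType} {n : nat} (z : 'I_n -> R) (t : R) : R :=
  \sum_(i < n) `|soft (z i) t|.

Definition norm1 {R : realType} {n : nat} (z : 'I_n -> R) : R := \sum_(i < n) `|z i|.
Definition normInf {R : realType} {n : nat} (z : 'I_n -> R) : R :=
  \big[Num.max/0]_(i < n) `|z i|.

(* |z_(2)| : second largest absolute value of the entries of z; 0 if n = 1
   (nth default 0 handles that case). *)
Definition abs_sorted2 {R : realType} {n : nat} (z : 'I_n -> R) : R :=
  nth 0 (sort (fun a b : R => b <= a) [seq `|z i| | i <- enum 'I_n]) 1.

(* min of a set of reals, in extended reals: +oo on the empty set.
   (The sets used below are closed, so the minimum is attained when nonempty.) *)
Definition setmin {R : realType} (A : set R) : \bar R := ereal_inf [set x%:E | x in A].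
(* max of a set: -oo if empty, +oo if unbounded above. *)
Definition setmax {R : realType} (A : set R) : \bar R := ereal_sup [set x%:E | x in A].

Definition Lset12 {R : realType} {n : nat} (z : 'I_n -> R) (w : R) : set R :=
  [set l | 0 <= l /\ soft_norm1 z l + l <= w].
Definition Lset3 {R : realType} {n : nat} (z : 'I_n -> R) (w : R) : set R :=
  [set l | 0 <= l /\ w <= soft_norm1 z (2 * l)].

Definition lambda1 {R : realType} {n : nat} (z : 'I_n -> R) (w : R) := setmin (Lset12 z w).
Definition lambda2 {R : realType} {n : nat} (z : 'I_n -> R) (w : R) := setmax (Lset12 z w).
Definition lambda3 {R : realType} {n : nat} (z : 'I_n -> R) (w : R) := setmax (Lset3 z w).

(* Main.v *)
Require Import Defs.
From HB Require Import structures.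
From mathcomp Require Import all_boot all_order all_algebra.
From mathcomp Require Import all_classical all_reals ereal.
From mathcomp Require Import ring lra.
Import Order.TTheory GRing.Theory Num.Theory.
Local Open Scope ring_scope.

Set Implicit Arguments.
Section H.
Context {R : realType}.
Implicit Types x t : R.
Lemma mxl (a b : R) : a <= Num.max a b. Proof. by rewrite le_max lexx. Qed.
Lemma mxr (a b : R) : b <= Num.max a b. Proof. by rewrite le_max lexx orbT. Qed.

Lemma abs_soft x t : 0 <= t -> `|soft x t| = Num.max (`|x| - t) 0.
Proof.
move=> t0; rewrite /soft normrM normr_sg (ger0_norm (mxr _ _)).
have [->|nx] := eqVneq x 0; last by rewrite mul1r.
by rewrite mul0r normr0 sub0r; apply/esym/max_idPr; rewrite oppr_le0.
Qed.

Variable n : nat.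
Variable z : 'I_n -> R.

Lemma fE t : 0 <= t -> soft_norm1 z t = \sum_(i < n) Num.max (`|z i| - t) 0.
Proof. by move=> t0; apply: eq_bigr => i _; rewrite abs_soft. Qed.

Lemma f_ge0 t : 0 <= soft_norm1 z t.
Proof. by apply: sumr_ge0 => i _. Qed.

Lemma f_noninc t s : 0 <= t -> t <= s -> soft_norm1 z s <= soft_norm1 z t.
Proof.
move=> t0 ts; rewrite !fE ?(le_trans t0) //; apply: ler_sum => i _.
apply: le_max2 => //; lra.
Qed.

Lemma f0 : soft_norm1 z 0 = norm1 z.
Proof. rewrite fE //; apply: eq_bigr => i _; rewrite subr0; apply/max_idPl. by []. Qed.

Lemma le_M i : `|z i| <= normInf z.
Proof. exact: le_bigmax. Qed.

Lemma M_ge0 : 0 <= normInf z.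
Proof. rewrite /normInf; elim/big_ind: _ => //= a b; rewrite le_max => -> //. Qed.

Lemma M_le c : 0 <= c -> (forall i, `|z i| <= c) -> normInf z <= c.
Proof. by move=> c0 h; rewrite /normInf; apply: bigmax_le => // i _. Qed.

Lemma M_le_g l : 0 <= l -> normInf z <= soft_norm1 z l + l.
Proof.
move=> l0; apply: M_le; first by apply: addr_ge0 => //; apply: f_ge0.
move=> i; rewrite fE // (bigD1 i) //= -addrA.
have h : 0 <= \sum_(j < n | j != i) Num.max (`|z j| - l) 0.
  by apply: sumr_ge0 => j _; exact: mxr.
 have := mxl (`|z i| - l) 0; lra.
Qed.

Lemma f_big l : normInf z <= l -> soft_norm1 z l = 0.
Proof.
move=> Ml; rewrite fE ?(le_trans M_ge0) //; apply: big1 => i _.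
apply/max_idPr; have := le_M i; lra.
Qed.

Lemma f_bound t : 0 <= t -> t <= normInf z -> 0 < normInf z ->
  soft_norm1 z t <= norm1 z - norm1 z * t / normInf z.
Proof.
move=> t0 tM M0; rewrite fE // /norm1 -mulrA mulr_suml -sumrB.
apply: ler_sum => i _; rewrite ge_max; set a := `|z i|.
have a0 : 0 <= a by exact: normr_ge0.
have aM : a <= normInf z by exact: le_M.
have h1 : t / normInf z <= 1 by rewrite ler_pdivrMr // mul1r.
have h2 : a / normInf z <= 1 by rewrite ler_pdivrMr // mul1r.
have e: a * (t / normInf z) <= a by apply: ler_piMr.
have e2: t * (a / normInf z) <= t by apply: ler_piMr.
have -> : a * (t / normInf z) = t * (a / normInf z) by rewrite mulrCA !mulrA.
apply/andP; split; lra.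
Qed.

Lemma sorted2 : (0 < n)%N -> 0 <= abs_sorted2 z /\
  soft_norm1 z (abs_sorted2 z) + abs_sorted2 z <= normInf z.
Proof.
move=> n0; rewrite /abs_sorted2.
set s := sort _ _.
have ps : perm_eq s [seq `|z i| | i <- enum 'I_n] by rewrite perm_sort perm_refl.
have mem x : x \in s -> exists i, x = `|z i|.
  by rewrite mem_sort => /mapP [i _ ->]; exists i.
have srt : sorted (fun a b : R => b <= a) s.
  by apply: sort_sorted => a b; rewrite orbC le_total.
have hsum (F : R -> R) : \sum_(i < n) F `|z i| = \sum_(x <- s) F x.
  by rewrite [RHS](perm_big _ ps) big_map big_enum.
have sz : size s = n by rewrite size_sort size_map size_enum_ord.
clear ps; move: srt sz mem hsum; case: s => [|x0 [|x1 r]] //=.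
- by move=> _ sz; rewrite -sz in n0.
- move=> _ _ mem hsum; have [i ex0] := mem x0 (mem_head _ _).
  split => //; rewrite fE // (hsum (fun x => Num.max (x - 0) 0)) big_cons big_nil addr0 subr0.
  rewrite ex0 (max_idPl (normr_ge0 _)) addr0; exact: le_M.
- move=> /andP [x10 pr] _ mem hsum.
  have [i ex0] := mem x0 (mem_head _ _).
  have [j ex1] : exists j, x1 = `|z j| by apply: mem; rewrite inE mem_head orbT.
  have x1g : 0 <= x1 by rewrite ex1.
  split => //; rewrite fE // (hsum (fun x => Num.max (x - x1) 0)) !big_cons subrr maxxx add0r.
  rewrite big1_seq ?addr0; last first.
    move=> y /andP [_ yr]; apply/max_idPr.
    have := order_path_min (fun _ _ _ h1 h2 => le_trans h2 h1) pr.
    move=> /allP /(_ y yr) /= yx1; lra.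
  have x0M : x0 <= normInf z by rewrite ex0; exact: le_M.
  rewrite (max_idPl _); first lra.
  rewrite subr_ge0; exact: x10.
Qed.
End H.

Unset Implicit Arguments.
Lemma fin_between (R : realType) (x : \bar R) a b :
  (a%:E <= x)%E -> (x <= b%:E)%E -> x \is a fin_num.
Proof. by case: x. Qed.

Theorem lemma2 (R : realType) (p : nat) (hp : (2 <= p)%N) (w : R) (hw : 0 <= w)
    (z : 'I_p.-1 -> R) :
  ((normInf z <= w) <->
     (lambda1 z w \is a fin_num /\ lambda2 z w \is a fin_num))
  /\ (normInf z <= w ->
        (lambda1 z w <= (abs_sorted2 z)%:E)%E /\ lambda2 z w = w%:E)
  /\ ((w <= norm1 z /\ 0 < w) <-> lambda3 z w \is a fin_num)
  /\ (w <= norm1 z /\ 0 < w ->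
        (lambda3 z w <= ((1 - w / norm1 z) * normInf z / 2)%:E)%E)
  /\ (0 < w -> normInf z <= w -> w <= norm1 z ->
        (lambda3 z w <= lambda1 z w)%E /\ (lambda1 z w <= lambda2 z w)%E).
Proof.
have n0 : (0 < p.-1)%N by rewrite -ltnS prednK // ltnW.
have M0 := M_ge0 z.
have N0 : 0 <= norm1 z by apply: sumr_ge0.
have L12M l : Lset12 z w l -> normInf z <= w.
  by case=> l0 hl; apply: le_trans hl; apply: M_le_g.
have L12w l : Lset12 z w l -> l <= w.
  by case=> l0 hl; have := f_ge0 z l; lra.
have wL12 : normInf z <= w -> Lset12 z w w.
  by move=> Mw; split => //; rewrite f_big // add0r.
have lam1_ge0 : (0%:E <= lambda1 z w)%E.
  by apply: le_ereal_inf_tmp => _ [l [l0 _] <-]; rewrite lee_fin.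
have lam1_le l : Lset12 z w l -> (lambda1 z w <= l%:E)%E.
  by move=> hl; apply: ereal_inf_lbound; exists l.
have lam2E : normInf z <= w -> lambda2 z w = w%:E.
  move=> Mw; apply/le_anti/andP; split.
    by apply: ge_ereal_sup => _ [l hl <-]; rewrite lee_fin; exact: L12w.
  by apply: ereal_sup_ubound; exists w => //; exact: wL12.
have ne1 : lambda1 z w \is a fin_num -> exists l, Lset12 z w l.
  move=> hf; case: (pselect (exists l, Lset12 z w l)) => // nE.
  move: hf; rewrite /lambda1 /setmin.
  have -> : [set x%:E | x in Lset12 z w]%classic = set0.
    by apply/seteqP; split => // x [l hl _]; apply: nE; exists l.
  by rewrite ereal_inf0.
have bound3 l : 0 < w -> Lset3 z w l ->
    [/\ 0 < norm1 z, w <= norm1 z & l <= (1 - w / norm1 z) * normInf z / 2].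
  move=> w0 [l0 hl].
  have fN : soft_norm1 z (2 * l) <= norm1 z.
    by rewrite -f0; apply: f_noninc => //; rewrite mulr_ge0.
  have Npos : 0 < norm1 z by lra.
  have lt2 : 2 * l < normInf z.
    rewrite ltNge; apply/negP => h; move: hl; rewrite f_big //; lra.
  have Mpos : 0 < normInf z by lra.
  have fb := @f_bound _ _ z (2 * l) (mulr_ge0 (ler0n _ 2) l0) (ltW lt2) Mpos.
  split => //; first lra.
  move: Npos Mpos fb hl; set N := norm1 z; set M := normInf z => Npos Mpos fb hl.
  have k : w * (M / N) <= (N - N * (2 * l) / M) * (M / N).
    by rewrite ler_pM2r ?divr_gt0 //; lra.
  have e : (N - N * (2 * l) / M) * (M / N) = M - 2 * l.
    by field; apply/andP; split; rewrite gt_eqF.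
  have e2 : (1 - w / N) * M / 2 = (M - w * (M / N)) / 2.
    by field; rewrite gt_eqF.
  rewrite e2; rewrite e in k; lra.
have lam3_le : 0 < w -> (lambda3 z w <= ((1 - w / norm1 z) * normInf z / 2)%:E)%E.
  move=> w0; apply: ge_ereal_sup => _ [l hl <-]; rewrite lee_fin.
  by have [] := bound3 l w0 hl.
have L3_0 : w <= norm1 z -> Lset3 z w 0.
  by move=> h; split => //; rewrite mulr0 f0.
have lam3_ge0 : w <= norm1 z -> (0%:E <= lambda3 z w)%E.
  by move=> h; apply: ereal_sup_ubound; exists 0 => //; exact: L3_0.
split.
  split.
    move=> Mw; split; first exact: (fin_between _ _ _ _ lam1_ge0 (lam1_le _ (wL12 Mw))).
    by rewrite lam2E.
  by case=> /ne1 [l /L12M].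
split.
  move=> Mw; split; last exact: lam2E.
  have [s0 sb] := sorted2 z n0.
  by apply: lam1_le; split => //; apply: le_trans Mw.
split.
  split.
    case=> wN w0; exact: (fin_between _ _ _ _ (lam3_ge0 wN) (lam3_le w0)).
  move=> hf.
  have [l hl] : exists l, Lset3 z w l.
    case: (pselect (exists l, Lset3 z w l)) => // nE.
    move: hf; rewrite /lambda3 /setmax.
    have -> : [set x%:E | x in Lset3 z w]%classic = set0.
      by apply/seteqP; split => // x [l hl _]; apply: nE; exists l.
    by rewrite ereal_sup0.
  have w0 : 0 < w.
    rewrite lt_neqAle hw andbT; apply/negP => /eqP w0.
    move: hf; case E : (lambda3 z w) => [r| |] // _.
    have hl' : Lset3 z w (Num.max r 0 + 1).
      split; first by apply: addr_ge0 => //; rewrite le_max lexx orbT.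
      by rewrite -w0; apply: f_ge0.
    have := ereal_sup_ubound (ex_intro2 _ _ _ hl' erefl : [set x%:E | x in Lset3 z w]%classic _).
    rewrite -/(setmax _) -/(lambda3 z w) E lee_fin.
    have := mxl r 0; lra.
  by have [] := bound3 l w0 hl.
split.
  by case=> wN w0; apply: lam3_le.
move=> w0 Mw wN; split; last first.
  by rewrite lam2E //; apply: lam1_le; exact: wL12.
apply: le_ereal_inf_tmp => _ [b hb <-].
apply: ge_ereal_sup => _ [a ha <-]; rewrite lee_fin.
rewrite leNgt; apply/negP => ba.
case: hb => b0 hb; case: (ha) => a0 hfa.
have fab : soft_norm1 z (2 * a) <= soft_norm1 z b by apply: f_noninc => //; lra.
have b00 : b = 0 by lra.
rewrite b00 f0 addr0 in hb.
have [Npos _ ab] := bound3 a w0 ha.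
have h1 : 1 <= w / norm1 z by rewrite ler_pdivlMr // mul1r.
have h2 : (1 - w / norm1 z) * normInf z <= 0 by rewrite mulr_le0_ge0 //; lra.
lra.
Qed.
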